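(* Let $M$ be a finite-horizon (reward-free) MDP, let $\Pi\subseteq\Pi_{\mathrm{RNS}}$ be a set of policies, and fix a layer $h\in[H]$. For any distribution $p\in\Delta(\Pi_{\mathrm{RNS}})$, for all functions $g:\mathcal{X}\times\mathcal{A}\to[0,B]$, all $\pi\in\Pi$, and all $\varepsilon>0$, $$\mathbb{E}^{M,\pi}\big[g(x_h,a_h)\big]\le 2\sqrt{\Psi^{M}_{h,\varepsilon}(p)\cdot\mathbb{E}^{M,p}\big[g^2(x_h,a_h)\big]}+\Psi^{M}_{h,\varepsilon}(p)\cdot(\varepsilon B).$$
   Context: An episodic reward-free MDP $M$ has countable state space $\mathcal{X}$, action space $\mathcal{A}$, horizon $H$, initial distribution $P_0$ and transitions $P^M_h:\mathcal{X}\times\mathcal{A}\to\Delta(\mathcal{X})$. A randomized non-stationary policy is $\pi=(\pi_1,\dots,\pi_H)$ with $\pi_h:\mathcal{X}\to\Delta(\mathcal{A})$; $\Pi_{\mathrm{RNS}}$ is the set of all such policies. An episode: $x_1\sim P_0$, $a_h\sim\pi_h(x_h)$, $x_{h+1}\sim P^M_h(\cdot\mid x_h,a_h)$; $\mathbb{E}^{M,\pi}$ denotes expectation under this process, and $d^{M,\pi}_h(x,a)=\mathbb{P}^{M,\pi}[x_h=x,a_h=a]$. For $p\in\Delta(\Pi_{\mathrm{RNS}})$, $d^{M,p}_h=\mathbb{E}_{\pi\sim p}[d^{M,\pi}_h]$ and $\mathbb{E}^{M,p}$ denotes expectation when first $\pi\sim p$ is drawn and then executed. The $L_1$-Coverage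 objective is $$\Psi^M_{h,\varepsilon}(p)=\sup_{\pi\in\Pi}\mathbb{E}^{M,\pi}\Big[\frac{d^{M,\pi}_h(x_h,a_h)}{d^{M,p}_h(x_h,a_h)+\varepsilon\, d^{M,\pi}_h(x_h,a_h)}\Big].$$ *)

(* Defs.v *)
From HB Require Import structures.
From mathcomp Require Import all_boot all_order all_algebra.
From mathcomp Require Import all_classical all_reals all_analysis.
Set Implicit Arguments. Unset Strict Implicit. Unset Printing Implicit Defensive.
Import Order.TTheory GRing.Theory Num.Theory.
Local Open Scope classical_set_scope.
Local Open Scope ring_scope.

(* Layers are 0-based: paper layer h in [H] is our index h-1, 0 <= h-1 < H. *)
Section MDP.
Context {R : realType} {X A : countType}.

Definition psum {T : choiceType} (f : T -> R) : \bar R :=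
  \esum_(t in [set: T]) (f t)%:E.

Definition is_dist {T : choiceType} (q : T -> R) : Prop :=
  (forall t, 0 <= q t) /\ psum q = 1%E.

(* randomized non-stationary mdp_policy: pi h x is a distribution over actions *)
Definition mdp_policy := nat -> X -> A -> R.
(* transition kernels: P h x a is a distribution over next states *)
Definition mdp_kernel := nat -> X -> A -> X -> R.

Definition is_policy (H : nat) (pi : mdp_policy) : Prop :=
  forall h x, (h < H)%N -> is_dist (pi h x).

Definition is_mdp (H : nat) (P0 : X -> R) (P : mdp_kernel) : Prop :=
  is_dist P0 /\ forall h x a, (h < H)%N -> is_dist (P h x a).

(* occupancy d^{M,pi}_h(x,a) = P^{M,pi}[x_h = x, a_h = a] *)
Fixpoint occ (P0 : X -> R) (P : mdp_kernel) (pi : mdp_policy) (h : nat) : X -> A -> R :=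
  match h with
  | 0 => fun x a => P0 x * pi 0%N x a
  | h'.+1 => fun x' a' =>
      fine (\esum_(xa in [set: (X * A)%type])
              (occ P0 P pi h' xa.1 xa.2 * P h' xa.1 xa.2 x')%:E)
      * pi h'.+1 x' a'
  end.

Definition Epi (P0 : X -> R) (P : mdp_kernel) (pi : mdp_policy) (h : nat)
  (f : X -> A -> R) : \bar R :=
  \esum_(xa in [set: (X * A)%type]) (occ P0 P pi h xa.1 xa.2 * f xa.1 xa.2)%:E.

(* p in Delta(Pi_RNS) is represented by a probability space (I, Pp) and a
   mdp_policy-valued map pol : I -> mdp_policy (p = law of pol under Pp). *)
Definition occ_mix {d : measure_display} {I : measurableType d}
  (Pp : probability I R) (pol : I -> mdp_policy)
  (P0 : X -> R) (P : mdp_kernel) (h : nat) (x : X) (a : A) : R :=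
  fine (\int[Pp]_i (occ P0 P (pol i) h x a)%:E).

Definition Emix {d : measure_display} {I : measurableType d}
  (Pp : probability I R) (pol : I -> mdp_policy)
  (P0 : X -> R) (P : mdp_kernel) (h : nat) (f : X -> A -> R) : \bar R :=
  \int[Pp]_i Epi P0 P (pol i) h f.

(* L1-Coverage objective Psi^M_{h,eps}(p); the integrand
   d^pi/(d^p + eps d^pi) is weighted by d^pi, so where d^pi = 0 the summand
   is 0 (convention 0 * (0/0) = 0). *)
Definition Psi {d : measure_display} {I : measurableType d}
  (Pp : probability I R) (pol : I -> mdp_policy)
  (P0 : X -> R) (P : mdp_kernel) (Pi : set mdp_policy) (h : nat) (eps : R) : \bar R :=
  ereal_sup [set Epi P0 P pi h
      (fun x a => let dpi := occ P0 P pi h x a in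
                  if dpi == 0 then 0
                  else dpi / (occ_mix Pp pol P0 P h x a + eps * dpi))
    | pi in Pi].

End MDP.

(* Main.v *)
Require Import Defs.
From HB Require Import structures.
From mathcomp Require Import all_boot all_order all_algebra.
From mathcomp Require Import all_classical all_reals all_analysis.
From mathcomp Require Import ring lra.
Import Order.TTheory GRing.Theory Num.Theory.
Local Open Scope classical_set_scope.
Local Open Scope ring_scope.

Section Gen.
Context {R : realType}.
Local Open Scope ereal_scope.

Lemma esumZl_le (T : choiceType) (c : \bar R) (f : T -> \bar R) : 0 <= c ->
  (forall x, 0 <= f x) ->
  \esum_(i in [set: T]) (c * f i) <= c * \esum_(i in [set: T]) f i.
Proof.
move=> c0 f0; apply: ge_ereal_sup => _ [F [finF _] <-] /=.
rewrite -ge0_mule_fsumr //; apply: lee_wpmul2l => //.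
by apply: ereal_sup_ubound; exists F.
Qed.

Lemma esum_swap (T1 T2 : choiceType) (f : T1 -> T2 -> \bar R) :
  (forall i j, 0 <= f i j) ->
  \esum_(i in [set: T1]) \esum_(j in [set: T2]) f i j =
  \esum_(j in [set: T2]) \esum_(i in [set: T1]) f i j.
Proof.
move=> f0; rewrite esum_esum // esum_esum //.
rewrite (@reindex_esum _ _ _ ([set: T2] `*`` fun _ => [set: T1])
   ([set: T1] `*`` fun _ => [set: T2]) (fun p => (p.2, p.1))) //.
split.
- by move=> [a b] _.
- by move=> [a b] [c e] _ _ [-> ->].
- by move=> [a b] _; exists (b, a).
Qed.

Lemma esum_pair (T1 T2 : choiceType) (f : T1 -> T2 -> \bar R) :
  (forall i j, 0 <= f i j) ->
  \esum_(p in [set: (T1 * T2)%type]) f p.1 p.2 =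
  \esum_(i in [set: T1]) \esum_(j in [set: T2]) f i j.
Proof.
move=> f0; rewrite esum_esum //; congr esum.
by apply/seteqP; split => // [[a b]].
Qed.

Lemma fine_le_self (x : \bar R) : 0 <= x -> (fine x)%:E <= x.
Proof. by case: x => //= _; rewrite leey. Qed.

Lemma int_mono d (T : measurableType d) (mu : {measure set T -> \bar R})
  (f g : T -> \bar R) : (forall x, 0 <= f x) -> (forall x, f x <= g x) ->
  \int[mu]_x f x <= \int[mu]_x g x.
Proof.
move=> f0 fg; have g0 x : 0 <= g x by exact: le_trans (f0 x) (fg x).
rewrite !ge0_integralTE //; apply: ereal_sup_le => _ [h hf <-].
by exists h => // x; exact: le_trans (hf x) (fg x).
Qed.

Lemma esumZ_le_real (T : choiceType) (c : R) (f : T -> R) : (0 <= c)%R ->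
  (forall x, 0 <= f x)%R ->
  \esum_(i in [set: T]) (c * f i)%:E <= c%:E * \esum_(i in [set: T]) (f i)%:E.
Proof.
move=> c0 f0; under eq_esum => i _ do rewrite EFinM.
by apply: esumZl_le => [|x]; rewrite lee_fin.
Qed.

End Gen.

Section Alg.
Context {R : realType}.

Lemma final_alg (e psi m c : R) : 0 <= e -> 0 <= psi -> 0 <= m -> 0 <= c ->
  (forall l, 0 < l -> e <= l / 2 * psi + (m + c * e) / (2 * l)) ->
  e <= 2 * Num.sqrt (psi * m) + psi * c.
Proof.
move=> e0 p0 m0 c0 H.
have key : e ^+ 2 <= psi * (m + c * e).
  set Q := m + c * e.
  have Q0 : 0 <= Q by rewrite /Q; nra.
  have [->|ep] := eqVneq e 0; first by rewrite expr0n /= mulr_ge0.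
  have ep' : 0 < e by rewrite lt_neqAle eq_sym ep e0.
  have [Qz|Qn] := eqVneq Q 0.
    have l0 : 0 < e / (psi + 1) by apply: divr_gt0 => //; lra.
    have := H _ l0; rewrite -/Q Qz mul0r addr0 => He.
    have : e / (psi + 1) / 2 * psi < e.
      have -> : e / (psi + 1) / 2 * psi = e * (psi / (2 * (psi + 1))) by field; lra.
      rewrite -[ltRHS]mulr1 ltr_pM2l //.
      by rewrite ltr_pdivrMr; lra.
    lra.
  have Qp : 0 < Q by rewrite lt_neqAle eq_sym Qn Q0.
  have l0 : 0 < Q / e by apply: divr_gt0.
  have := H _ l0; rewrite -/Q.
  have -> : Q / (2 * (Q / e)) = e / 2 by field; apply/andP; split; lra.
  have -> : Q / e / 2 * psi = (Q * psi) / e / 2 by field; lra.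
  move=> He.
  have : e <= Q * psi / e by lra.
  rewrite ler_pdivlMr // => He2.
  by rewrite expr2 mulrC; lra.
set s := Num.sqrt (psi * m).
have s0 : 0 <= s by exact: sqrtr_ge0.
have ss : s ^+ 2 = psi * m by rewrite sqr_sqrtr // mulr_ge0.
have pc0 : 0 <= psi * c by exact: mulr_ge0.
suff : e <= s + psi * c by lra.
rewrite leNgt; apply/negP => Hlt.
have H1 : s < e by nra.
have H2 : s < e - psi * c by lra.
have : s ^+ 2 < e * (e - psi * c).
  rewrite expr2; apply: ltr_pM => //.
nra.
Qed.

Lemma amgm_pt (u p g l eps B : R) : 0 <= u -> 0 <= p -> 0 <= g -> g <= B ->
  0 < l -> 0 < eps ->
  u * g <= l / 2 * (u * (if u == 0 then 0 else u / (p + eps * u)))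
           + 1 / (2 * l) * (p * g ^+ 2) + eps / (2 * l) * (B * (u * g)).
Proof.
move=> u0 p0 g0 gB l0 e0.
have [->|un] := eqVneq u 0.
  rewrite !(mul0r, mulr0) add0r addr0.
  apply: mulr_ge0; [apply: divr_ge0; lra|]. apply: mulr_ge0 => //; exact: sqr_ge0.
have up : 0 < u by rewrite lt_neqAle eq_sym un u0.
have Dp : 0 < p + eps * u by nra.
have E : l / 2 * (u * (u / (p + eps * u))) + 1 / (2 * l) * (p * g ^+ 2)
   + eps / (2 * l) * (B * (u * g)) - u * g =
   (l * u - (p + eps * u) * g) ^+ 2 / (2 * l * (p + eps * u))
   + eps * u * g * (B - g) / (2 * l).
  by field; apply/andP; split; lra.
rewrite -subr_ge0 E; apply: addr_ge0; apply: divr_ge0; try nra.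
- exact: sqr_ge0.
- apply: mulr_ge0; last lra. by apply: mulr_ge0 => //; apply: mulr_ge0; lra.
Qed.

End Alg.

Section Occ.
Context {R : realType} {X A : countType}.
Variables (H : nat) (P0 : X -> R) (P : @mdp_kernel R X A).
Hypothesis hM : is_mdp H P0 P.

Lemma occ_ge0 (pi : @mdp_policy R X A) : is_policy H pi ->
  forall k, (k < H)%N -> forall x a, 0 <= occ P0 P pi k x a.
Proof.
case: hM => -[P00 _] hP hpi; elim => [|k IH] hk x a /=.
  by apply: mulr_ge0; [exact: P00| exact: (hpi 0%N x hk).1].
apply: mulr_ge0; last exact: (hpi _ _ hk).1.
apply: fine_ge0; apply: esum_ge0 => xa _; rewrite lee_fin.
apply: mulr_ge0; first by apply: IH; apply: ltnW.
exact: (hP k _ _ (ltnW hk)).1.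
Qed.

Local Open Scope ereal_scope.

Lemma occ_sum (pi : @mdp_policy R X A) : is_policy H pi ->
  forall k, (k < H)%N ->
  \esum_(xa in [set: (X * A)%type]) (occ P0 P pi k xa.1 xa.2)%:E <= 1.
Proof.
move=> hpi; have [[P00 P01] hP] := hM.
elim => [|k IH] hk /=.
  rewrite (@esum_pair R X A (fun x a => (P0 x * pi 0%N x a)%:E)); last first.
    by move=> x a; rewrite lee_fin; apply: mulr_ge0; [exact: P00| exact: (hpi 0%N x hk).1].
  apply: (@le_trans _ _ (\esum_(x in [set: X]) (P0 x)%:E)); last first.
    by move: P01; rewrite /psum => ->.
  apply: le_esum => x _; under eq_esum do rewrite EFinM.
  apply: (@le_trans _ _ ((P0 x)%:E * \esum_(a in [set: A]) (pi 0%N x a)%:E)).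
    apply: esumZl_le; first by rewrite lee_fin.
    by move=> a; rewrite lee_fin; exact: (hpi 0%N x hk).1.
  by have := (hpi 0%N x hk).2; rewrite /psum => ->; rewrite mule1.
have hk' : (k < H)%N by apply: ltnW.
have occ0 := @occ_ge0 pi hpi k hk'.
have Pge0 (xa : (X * A)%type) y : (0 <= P k xa.1 xa.2 y)%R by exact: (hP k _ _ hk').1.
set S := fun y : X => \esum_(xa0 in [set: (X * A)%type])
   (occ P0 P pi k xa0.1 xa0.2 * P k xa0.1 xa0.2 y)%:E.
have S0 y : 0 <= S y.
  by apply: esum_ge0 => xa _; rewrite lee_fin mulr_ge0.
rewrite (@esum_pair R X A (fun y a' => (fine (S y) * pi k.+1 y a')%:E)); last first.
  by move=> x a; rewrite lee_fin; apply: mulr_ge0; [exact: fine_ge0| exact: (hpi _ x hk).1].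
apply: (@le_trans _ _ (\esum_(y in [set: X]) S y)).
  apply: le_esum => y _; under eq_esum do rewrite EFinM.
  apply: (@le_trans _ _ ((fine (S y))%:E * \esum_(a in [set: A]) (pi k.+1 y a)%:E)).
    apply: esumZl_le; first by rewrite lee_fin fine_ge0.
    by move=> a; rewrite lee_fin; exact: (hpi _ y hk).1.
  have := (hpi _ y hk).2; rewrite /psum => ->; rewrite mule1.
  exact: fine_le_self.
rewrite /S (@esum_swap R X _ (fun y xa0 => (occ P0 P pi k xa0.1 xa0.2 * P k xa0.1 xa0.2 y)%:E)); last first.
  by move=> y xa; rewrite lee_fin mulr_ge0.
apply: le_trans (IH hk').
apply: le_esum => xa _; under eq_esum do rewrite EFinM.
apply: (@le_trans _ _ ((occ P0 P pi k xa.1 xa.2)%:E * \esum_(y in [set: X]) (P k xa.1 xa.2 y)%:E)).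
  apply: esumZl_le; first by rewrite lee_fin.
  by move=> y; rewrite lee_fin.
by have := (hP k xa.1 xa.2 hk').2; rewrite /psum => ->; rewrite mule1.
Qed.
End Occ.

Lemma occ_le1 {R : realType} {X A : countType} (H : nat) (P0 : X -> R)
  (P : @mdp_kernel R X A) (hM : is_mdp H P0 P) (pi : @mdp_policy R X A)
  (hpi : is_policy H pi) k (hk : (k < H)%N) x a :
  occ P0 P pi k x a <= 1.
Proof.
rewrite -lee_fin; apply: le_trans (@occ_sum _ _ _ H P0 P hM pi hpi k hk).
apply: esum_ge; exists [set (x, a)]; first by split; [exact: finite_set1|].
by rewrite fsbig_set1.
Qed.

Lemma ratio_le {R : realType} (u p eps : R) : 0 <= p -> 0 <= u -> 0 < eps ->
  u * (if u == 0 then 0 else u / (p + eps * u)) <= eps^-1 * u.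
Proof.
move=> p0 u0 e0; have [->|un] := eqVneq u 0; first by rewrite !(mulr0, mul0r).
have up : 0 < u by rewrite lt_neqAle eq_sym un u0.
have Dp : 0 < p + eps * u by nra.
rewrite mulrC [_ * u]mulrC ler_wpM2r //.
rewrite ler_pdivrMr; last by rewrite mulrC.
have -> : eps^-1 * (p + u * eps) = p / eps + u by field; lra.
have : 0 <= p / eps by apply: divr_ge0; lra.
lra.
Qed.

Theorem proposition3p1 (R : realType) (X A : countType) (H : nat)
  (P0 : X -> R) (P : @mdp_kernel R X A)
  (hM : is_mdp H P0 P)
  (Pi : set (@mdp_policy R X A)) (hPi : forall pi, Pi pi -> is_policy H pi)
  (h : nat) (hh : (h < H)%N)
  (d : measure_display) (I : measurableType d) (Pp : probability I R)
  (pol : I -> @mdp_policy R X A) (hpol : forall i, is_policy H (pol i))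
  (hmeas : forall x a, measurable_fun [set: I] (fun i => occ P0 P (pol i) h x a))
  (B : R) (g : X -> A -> R) (hg : forall x a, 0 <= g x a <= B)
  (pi : @mdp_policy R X A) (hpi : Pi pi)
  (eps : R) (heps : 0 < eps) :
  let psi := fine (Psi Pp pol P0 P Pi h eps) in
  fine (Epi P0 P pi h g) <=
    2 * Num.sqrt (psi * fine (Emix Pp pol P0 P h (fun x a => g x a ^+ 2)))
    + psi * (eps * B).
Proof.
cbv zeta; set psi := fine (Psi Pp pol P0 P Pi h eps).
have hpi' := hPi pi hpi.
have occ0 q (hq : is_policy H q) x a : 0 <= occ P0 P q h x a.
  exact: (@occ_ge0 _ _ _ H P0 P hM q hq h hh).
have occ1 q (hq : is_policy H q) x a : occ P0 P q h x a <= 1.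
  exact: (@occ_le1 _ _ _ H P0 P hM q hq h hh).
have g0 x a : 0 <= g x a by case/andP: (hg x a).
have gB x a : g x a <= B by case/andP: (hg x a).
have IC (r : R) : (\int[Pp]_i (r%:E) = r%:E)%E.
  rewrite (integral_cst Pp measurableT) -[RHS]mule1; congr (_ * _)%E; exact: probability_setT.
have Di x a : (0 <= \int[Pp]_i (occ P0 P (pol i) h x a)%:E <= 1)%E.
  apply/andP; split; first by apply: integral_ge0 => i _; rewrite lee_fin occ0.
  rewrite -(IC 1); apply: int_mono => i; rewrite lee_fin ?occ0 ?occ1 //.
have dp_eq x a : (occ_mix Pp pol P0 P h x a)%:E =
    (\int[Pp]_i (occ P0 P (pol i) h x a)%:E)%E.
  rewrite /occ_mix fineK //; case/andP: (Di x a) => D0 D1.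
  by rewrite ge0_fin_numE // (le_lt_trans D1) // ltry.
have dp0 x a : 0 <= occ_mix Pp pol P0 P h x a.
  by rewrite -lee_fin dp_eq; case/andP: (Di x a).
set rf := fun q x a => let dpi := occ P0 P q h x a in
   if dpi == 0 then 0 else dpi / (occ_mix Pp pol P0 P h x a + eps * dpi).
have rf0 q (hq : is_policy H q) x a : 0 <= occ P0 P q h x a * rf q x a.
  rewrite /rf /=; case: eqP => _; first by rewrite mulr0.
  apply: mulr_ge0; first exact: occ0.
  apply: divr_ge0; first exact: occ0.
  by apply: addr_ge0 => //; apply: mulr_ge0; [exact: ltW| exact: occ0].
have PsiE : Psi Pp pol P0 P Pi h eps = ereal_sup [set Epi P0 P q h (rf q) | q in Pi] by [].
have Epir0 : (0 <= Epi P0 P pi h (rf pi))%E.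
  by apply: esum_ge0 => xa _; rewrite lee_fin rf0.
have Psi_ge : (Epi P0 P pi h (rf pi) <= Psi Pp pol P0 P Pi h eps)%E.
  by rewrite PsiE; apply: ereal_sup_ubound; exists pi.
have Psi0 : (0 <= Psi Pp pol P0 P Pi h eps)%E by exact: le_trans Psi_ge.
have psi0 : 0 <= psi by exact: fine_ge0.
have [Bneg|B0] := ltP B 0.
  have emp (x : X) (a : A) : False.
    by have := le_trans (g0 x a) (gB x a); lra.
  have Ez q f : Epi P0 P q h f = 0%E.
    by apply: esum1 => -[x a]; case: (emp x a).
  have Ps0 : Psi Pp pol P0 P Pi h eps = 0%E.
    apply/eqP; rewrite eq_le Psi0 andbT PsiE.
    by apply: ge_ereal_sup => _ [q _ <-]; rewrite Ez.
  by rewrite /psi Ps0 Ez /= !mul0r sqrtr0 mulr0 addr0.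
have RHS0 : 0 <= 2 * Num.sqrt (psi * fine (Emix Pp pol P0 P h (fun x a => g x a ^+ 2)))
    + psi * (eps * B).
  apply: addr_ge0; first by apply: mulr_ge0 => //; exact: sqrtr_ge0.
  by apply: mulr_ge0 => //; apply: mulr_ge0 => //; exact: ltW.
set E := Epi P0 P pi h g.
have E0 : (0 <= E)%E by apply: esum_ge0 => xa _; rewrite lee_fin mulr_ge0 ?occ0.
have [Efin|Enf] := boolP (E \is a fin_num); last first.
  by case/fin_numPn: Enf => ->.
have Psi1 : (Psi Pp pol P0 P Pi h eps <= (eps^-1)%:E)%E.
  rewrite PsiE; apply: ge_ereal_sup => _ [q hq <-].
  have hq' := hPi q hq.
  apply: (@le_trans _ _ (\esum_(xa in [set: (X*A)%type]) ((eps^-1) * (occ P0 P q h xa.1 xa.2))%:E)).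
    apply: le_esum => xa _; rewrite lee_fin.
    by apply: ratio_le; [exact: dp0| exact: occ0| exact: heps].
  apply: le_trans (esumZ_le_real _ _ _ _ _) _.
  - by rewrite invr_ge0; exact: ltW.
  - by move=> xa; exact: occ0.
  rewrite -[X in (_ <= X)%E]mule1; apply: lee_wpmul2l.
    by rewrite lee_fin invr_ge0; exact: ltW.
  exact: (@occ_sum _ _ _ H P0 P hM q hq' h hh).
have Psfin : Psi Pp pol P0 P Pi h eps \is a fin_num.
  by rewrite ge0_fin_numE // (le_lt_trans Psi1) // ltry.
set M := Emix Pp pol P0 P h (fun x a => g x a ^+ 2).
have M0 : (0 <= M)%E.
  apply: integral_ge0 => i _; apply: esum_ge0 => xa _; rewrite lee_fin.
  by apply: mulr_ge0; [exact: occ0| exact: sqr_ge0].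
have M1 : (M <= (B^+2)%:E)%E.
  rewrite /M /Emix -IC; apply: int_mono => i.
    apply: esum_ge0 => xa _; rewrite lee_fin.
    by apply: mulr_ge0; [exact: occ0| exact: sqr_ge0].
  apply: (@le_trans _ _ (\esum_(xa in [set: (X*A)%type]) ((B^+2) * (occ P0 P (pol i) h xa.1 xa.2))%:E)).
    apply: le_esum => xa _; rewrite lee_fin mulrC; apply: ler_pM; [exact: sqr_ge0|exact: occ0| |exact: lexx].
    by rewrite !expr2; apply: ler_pM; [exact: g0|exact: g0|exact: gB|exact: gB].
  apply: le_trans (esumZ_le_real _ _ _ _ _) _.
  - exact: sqr_ge0.
  - by move=> xa; exact: occ0.
  rewrite -[X in (_ <= X)%E]mule1; apply: lee_wpmul2l.
    by rewrite lee_fin sqr_ge0.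
  exact: (@occ_sum _ _ _ H P0 P hM (pol i) (hpol i) h hh).
have Mfin : M \is a fin_num.
  by rewrite ge0_fin_numE // (le_lt_trans M1) // ltry.
have mD x a : measurable_fun (U := measurable_realfun.constructive_ereal_extended__canonical__measurable_structure_SigmaRing R) [set: I]
    (fun i => ((occ P0 P (pol i) h x a * g x a ^+ 2)%:E : \bar R)).
  apply/measurable_realfun.measurable_EFinP.
  exact: (measurable_realfun.measurable_funM (hmeas x a) (measurable_cst (g x a ^+ 2))).
have T1 : (\esum_(xa in [set: (X * A)%type])
    (occ_mix Pp pol P0 P h xa.1 xa.2 * g xa.1 xa.2 ^+ 2)%:E <= M)%E.
  apply: ge_ereal_sup => _ [F [finF _] <-] /=.
  have -> : (\sum_(xa \in F) (occ_mix Pp pol P0 P h xa.1 xa.2 * g xa.1 xa.2 ^+ 2)%:E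
     = \sum_(xa \in F) \int[Pp]_i (occ P0 P (pol i) h xa.1 xa.2 * g xa.1 xa.2 ^+ 2)%:E)%E.
    apply: eq_fsbigr => xa _.
    rewrite EFinM dp_eq -ge0_integralZr //.
    - by apply/measurable_realfun.measurable_EFinP; exact: hmeas.
    - by move=> i _; rewrite lee_fin; exact: occ0.
    - by rewrite lee_fin sqr_ge0.
  apply: (@le_trans _ _ (\int[Pp]_i \sum_(xa \in F) (occ P0 P (pol i) h xa.1 xa.2 * g xa.1 xa.2 ^+ 2)%:E)%E).
    rewrite (@ge0_integral_fsum _ _ _ Pp _ measurableT _
     (fun xa i => (occ P0 P (pol i) h xa.1 xa.2 * g xa.1 xa.2 ^+ 2)%:E)) //.
    - by move=> xa i _; rewrite lee_fin; apply: mulr_ge0; [exact: occ0|exact: sqr_ge0].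
  rewrite /M /Emix; apply: int_mono => i.
    by apply: fsume_ge0 => xa _; rewrite lee_fin; apply: mulr_ge0; [exact: occ0|exact: sqr_ge0].
  by apply: ereal_sup_ubound; exists F.
have key l (l0 : 0 < l) : (E <= (l / 2)%:E * Psi Pp pol P0 P Pi h eps
    + (1 / (2 * l))%:E * M + (eps / (2 * l))%:E * (B%:E * E))%E.
  have c1 : 0 <= l / 2 by apply: divr_ge0; lra.
  have c2 : 0 <= 1 / (2 * l) by apply: divr_ge0; lra.
  have c3 : 0 <= eps / (2 * l) by apply: divr_ge0; lra.
  have t1 xa : 0 <= occ P0 P pi h xa.1 xa.2 * rf pi xa.1 xa.2 by exact: rf0.
  have t2 xa : 0 <= occ_mix Pp pol P0 P h xa.1 xa.2 * g xa.1 xa.2 ^+ 2.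
    by apply: mulr_ge0; [exact: dp0| exact: sqr_ge0].
  have t3 xa : 0 <= B * (occ P0 P pi h xa.1 xa.2 * g xa.1 xa.2).
    by apply: mulr_ge0 => //; apply: mulr_ge0; [exact: occ0|exact: g0].
  apply: (@le_trans _ _ (\esum_(xa in [set: (X*A)%type])
     ((((l / 2) * (occ P0 P pi h xa.1 xa.2 * rf pi xa.1 xa.2))%:E
      + ((1 / (2 * l)) * (occ_mix Pp pol P0 P h xa.1 xa.2 * g xa.1 xa.2 ^+ 2))%:E)
      + ((eps / (2 * l)) * (B * (occ P0 P pi h xa.1 xa.2 * g xa.1 xa.2)))%:E))%E).
    apply: le_esum => xa _; rewrite -!EFinD lee_fin.
    by apply: amgm_pt; [exact: occ0|exact: dp0|exact: g0|exact: gB|exact: l0|exact: heps].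
  rewrite esumD; last 2 first.
  - by move=> xa _; rewrite -EFinD lee_fin; apply: addr_ge0; apply: mulr_ge0.
  - by move=> xa _; rewrite lee_fin; apply: mulr_ge0.
  rewrite esumD; last 2 first.
  - by move=> xa _; rewrite lee_fin; apply: mulr_ge0.
  - by move=> xa _; rewrite lee_fin; apply: mulr_ge0.
  apply: leeD; first apply: leeD.
  - apply: le_trans (esumZ_le_real _ _ _ _ _) _ => //.
    by apply: lee_wpmul2l; [rewrite lee_fin|exact: Psi_ge].
  - apply: le_trans (esumZ_le_real _ _ _ _ _) _ => //.
    by apply: lee_wpmul2l; [rewrite lee_fin|exact: T1].
  - apply: le_trans (esumZ_le_real _ _ _ _ _) _ => //.
    apply: lee_wpmul2l; first by rewrite lee_fin.
    apply: esumZ_le_real => // xa.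
    by apply: mulr_ge0; [exact: occ0|exact: g0].
apply: final_alg.
- exact: fine_ge0.
- exact: psi0.
- exact: fine_ge0.
- by apply: mulr_ge0 => //; exact: ltW.
move=> l l0; have := key l l0.
rewrite -(fineK Efin) -(fineK Psfin) -(fineK Mfin) -!EFinM -!EFinD lee_fin => K.
apply: (le_trans K); rewrite /psi.
set e := fine E; set m := fine M; set p := fine (Psi Pp pol P0 P Pi h eps).
have -> : (m + eps * B * e) / (2 * l) = 1 / (2 * l) * m + eps / (2 * l) * (B * e).
  by field; lra.
by rewrite addrA.
Qed.
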